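(* Let $k$ be a difference field of characteristic $0$ and $R=k\{y_1,\ldots,y_n\}$. Any strictly ascending chain $I_1\subsetneq I_2\subsetneq\cdots$ of well-mixed $\sigma$-ideals of $R$, each of which is generated by monomials (i.e. each $I_j$ is the well-mixed closure $\langle F_j\rangle$ of some set $F_j$ of monomials), is finite.
   Context: A difference field is a field $k$ with a ring endomorphism $\sigma$. $R=k\{y_1,\ldots,y_n\}$ is the polynomial ring over $k$ in the variables $\sigma^j(y_i)$ ($1\le i\le n$, $j\ge0$) with $\sigma$ extended naturally. For $p=\sum c_ix^i\in\mathbb{N}[x]$ and $a\in R$, $a^p=\prod_i(\sigma^i(a))^{c_i}$; for $\mathbf{u}\in\mathbb{N}[x]^n$ a monomial is $\mathbf{y}^{\mathbf{u}}=y_1^{u_1}\cdots y_n^{u_n}$. A $\sigma$-ideal is an ideal stable under $\sigma$; it is well-mixed if $ab\in I$ implies $a\sigma(b)\in I$. $\langle F\rangle$ is the smallest well-mixed $\sigma$-ideal containing $F$. *)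

(* Defs.v *)
From HB Require Import structures.
From mathcomp Require Import all_boot all_order all_algebra.
From mathcomp Require Import finmap.
From mathcomp Require Import monalg.

Set Implicit Arguments.
Unset Strict Implicit.
Unset Printing Implicit Defensive.

Import Order.TTheory GRing.Theory.
Local Open Scope ring_scope.

(* The variable sigma^j(y_i) is indexed by (i, j) : 'I_n * nat.               *)
Definition dvar (n : nat) := ('I_n * nat)%type.

(* Difference monomials y^u, u in N[x]^n: finitely supported exponent maps.   *)
Notation dmonom n := (cmonom (dvar n)).

Notation dpoly k n := {malg k[dmonom n]}.

(* sigma on monomials: the exponent of sigma^j(y_i) moves to sigma^(j+1)(y_i) *)
Definition shift_monom (n : nat) (m : dmonom n) : dmonom n :=
  ([cmonom m (x.1, x.2.-1) | x in [fset (y.1, y.2.+1) | y in finsupp m]%fset])%M.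

Definition sigmaR (k : fieldType) (sig : {rmorphism k -> k}) (n : nat)
  (p : dpoly k n) : dpoly k n :=
  mmap (fun c : k => (sig c)%:MP : dpoly k n)
       (fun m : dmonom n => (<< shift_monom m >> : dpoly k n)) p.

Definition is_monomial (k : fieldType) (n : nat) (p : dpoly k n) : Prop :=
  exists m : dmonom n, p = << m >>.

Definition is_ideal (k : fieldType) (n : nat) (I : dpoly k n -> Prop) : Prop :=
  [/\ I 0,
      (forall a b, I a -> I b -> I (a + b)) &
      (forall r a, I a -> I (r * a))].

Definition is_sigma_ideal (k : fieldType) (sig : {rmorphism k -> k}) (n : nat)
  (I : dpoly k n -> Prop) : Prop :=
  is_ideal I /\ (forall a, I a -> I (sigmaR sig a)).

Definition is_well_mixed (k : fieldType) (sig : {rmorphism k -> k}) (n : nat)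
  (I : dpoly k n -> Prop) : Prop :=
  is_sigma_ideal sig I /\ (forall a b, I (a * b) -> I (a * sigmaR sig b)).

Definition wm_closure (k : fieldType) (sig : {rmorphism k -> k}) (n : nat)
  (F : dpoly k n -> Prop) : dpoly k n -> Prop :=
  fun a => forall I : dpoly k n -> Prop,
    is_well_mixed sig I -> (forall f, F f -> I f) -> I a.

(* Main.v *)
Require Import Defs.
From HB Require Import structures.
From mathcomp Require Import all_boot all_order all_algebra.
From mathcomp Require Import finmap.
From mathcomp Require Import monalg.
From Stdlib Require Classical ClassicalEpsilon.

Set Implicit Arguments.
Unset Strict Implicit.
Unset Printing Implicit Defensive.
Import GRing.Theory.

Module WQO.

Definition good (X : Type) (R : X -> X -> Prop) (A : X -> Prop) :=
  forall f : nat -> X, (forall i, A (f i)) -> exists i j, (i < j)%N /\ R (f i) (f j).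

Lemma choiceN (Y : Type) (P : nat -> Y -> Prop) :
  (forall i, exists y, P i y) -> exists g : nat -> Y, forall i, P i (g i).
Proof.
move=> H; exists (fun i => proj1_sig (ClassicalEpsilon.constructive_indefinite_description _ (H i))).
by move=> i; case: (ClassicalEpsilon.constructive_indefinite_description _ (H i)).
Qed.

Lemma build (P : nat -> Prop) (Q : nat -> nat -> Prop) i0 :
  P i0 -> (forall i, P i -> exists j, (i < j)%N /\ P j /\ Q i j) ->
  exists g : nat -> nat, forall m, P (g m) /\ (g m < g m.+1)%N /\ Q (g m) (g m.+1).
Proof.
move=> P0 H.
have [h Hh] : exists h : nat -> nat, forall i, P i -> (i < h i)%N /\ P (h i) /\ Q i (h i).
  apply: (@choiceN nat (fun i j => P i -> (i < j)%N /\ P j /\ Q i j)) => i; case: (Classical_Prop.classic (P i)) => Pi.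
    by case: (H i Pi) => j Hj; exists j.
  by exists 0.
pose g := fix g m := if m is m'.+1 then h (g m') else i0.
have Pg : forall m, P (g m) by elim=> [|m IH] //=; case: (Hh _ IH) => _ [].
exists g => m; split; first exact: Pg.
by case: (Hh _ (Pg m)) => ? [].
Qed.

Lemma chain_lt (g : nat -> nat) : (forall m, g m < g m.+1)%N ->
  forall a b, (a < b)%N -> (g a < g b)%N.
Proof.
move=> H a; elim=> // b IH; rewrite ltnS leq_eqVlt => /orP[/eqP->//|/IH].
by move=> lt; apply: ltn_trans lt (H b).
Qed.

Lemma chain_R (X : Type) (R : X -> X -> Prop) (f : nat -> X) :
  (forall x y z, R x y -> R y z -> R x z) ->
  (forall m, R (f m) (f m.+1)) -> forall a b, (a < b)%N -> R (f a) (f b).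
Proof.
move=> tr H a; elim=> // b IH; rewrite ltnS leq_eqVlt => /orP[/eqP->//|/IH].
by move=> r; apply: tr r (H b).
Qed.

Lemma inf_sub (P : nat -> Prop) : (forall N, exists i, (N <= i)%N /\ P i) ->
  exists g : nat -> nat, forall m, P (g m) /\ (g m < g m.+1)%N.
Proof.
move=> H; case: (H 0) => i0 [_ Pi0].
have [|g Hg] := @build P (fun _ _ => True) i0 Pi0.
  by move=> i _; case: (H i.+1) => j [??]; exists j.
by exists g => m; case: (Hg m) => ? [].
Qed.

Lemma pigeon (c : nat -> nat) L : (forall i, c i < L)%N ->
  exists k, forall N, exists i, (N <= i)%N /\ c i = k.
Proof.
elim: L c => [|L IH] c Hc; first by have := Hc 0.
case: (Classical_Prop.classic (forall N, exists i, (N <= i)%N /\ c i = L)) => [H|H]; first by exists L.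
have [N HN] := Classical_Pred_Type.not_all_ex_not _ _ H.
have HN' : forall i, (N <= i)%N -> c i <> L.
  by move=> i Ni ci; apply: HN; exists i.
have [|k Hk] := IH (fun i => c (N + i)).
  move=> i; have := Hc (N + i); rewrite ltnS leq_eqVlt => /orP[/eqP e|//].
  by case: (HN' (N + i) (leq_addr _ _) e).
exists k => M; case: (Hk M) => i [Mi ci]; exists (N + i); split => //.
by apply: leq_trans Mi (leq_addl _ _).
Qed.

Lemma asc_sub (X : Type) (R : X -> X -> Prop) (A : X -> Prop) (f : nat -> X) :
  (forall x y z, R x y -> R y z -> R x z) -> good R A -> (forall i, A (f i)) ->
  exists g : nat -> nat, (forall m, g m < g m.+1)%N /\
     forall a b, (a < b)%N -> R (f (g a)) (f (g b)).
Proof.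
move=> tr gA Af.
have [N HN] : exists N, forall i, (N <= i)%N -> exists j, (i < j)%N /\ R (f i) (f j).
  apply: Classical_Prop.NNPP => H.
  have H' : forall N, exists i, (N <= i)%N /\ forall j, (i < j)%N -> ~ R (f i) (f j).
    move=> N; apply: Classical_Prop.NNPP => H1; apply: H; exists N => i Ni; apply: Classical_Prop.NNPP => H2.
    apply: H1; exists i; split => // j ij r; apply: H2; by exists j.
  have [g Hg] := inf_sub H'.
  have [a [b [ab r]]] := gA (fun m => f (g m)) (fun m => Af _).
  by case: (Hg a) => Ha _; apply: (Ha (g b)) => //; apply: chain_lt ab => m; case: (Hg m).
have [|g Hg] := @build (fun i => N <= i)%N (fun i j => R (f i) (f j)) N (leqnn N).
  move=> i Ni; case: (HN i Ni) => j [ij r]; exists j; split => //; split => //.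
  by apply: leq_trans Ni (ltnW ij).
exists g; split; first by move=> m; case: (Hg m) => _ [].
by apply: (chain_R (f := fun m => f (g m))) => // m; case: (Hg m) => _ [].
Qed.

Lemma good_prod (X Y : Type) (R1 : X -> X -> Prop) (R2 : Y -> Y -> Prop) A1 A2 :
  (forall x y z, R1 x y -> R1 y z -> R1 x z) -> good R1 A1 -> good R2 A2 ->
  good (fun p q : X * Y => R1 p.1 q.1 /\ R2 p.2 q.2) (fun p => A1 p.1 /\ A2 p.2).
Proof.
move=> tr g1 g2 f Af.
have [g [gi Hg]] := asc_sub tr g1 (f := fun i => (f i).1) (fun i => proj1 (Af i)).
have [a [b [ab r]]] := g2 (fun m => (f (g m)).2) (fun m => proj2 (Af _)).
by exists (g a), (g b); split; [apply: chain_lt|split => //; apply: Hg].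
Qed.

Lemma good_code (X Y : Type) (R : X -> X -> Prop) (A : X -> Prop)
   (S : Y -> Y -> Prop) (B : Y -> Prop) (P : X -> Y -> Prop) :
  (forall x, A x -> exists y, B y /\ P x y) ->
  (forall x y x' y', A x -> A x' -> P x y -> P x' y' -> S y y' -> R x x') ->
  good S B -> good R A.
Proof.
move=> ex refl gB f Af.
have [h Hh] := choiceN (fun i => ex _ (Af i)).
have [a [b [ab r]]] := gB h (fun i => proj1 (Hh i)).
by exists a, b; split => //; apply: refl r; [apply: Af|apply: Af|apply: (proj2 (Hh a))|apply: (proj2 (Hh b))].
Qed.

Lemma good_nat : good (fun a b : nat => a <= b)%N (fun _ => True).
Proof.
move=> f _.
suff H : forall v f, f 0 = v -> exists i j, (i < j)%N /\ (f i <= f j)%N by apply: (H _ f).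
elim/ltn_ind => v IH {}f f0.
case: (Classical_Prop.classic (exists j, (0 < j)%N /\ (f 0 <= f j)%N)) => [[j [? ?]]|H].
  by exists 0, j.
have [i [j [ij r]]] : exists i j, (i < j)%N /\ (f i.+1 <= f j.+1)%N.
  apply: (IH (f 1)) => //; rewrite -f0 ltnNge; apply/negP => r; apply: H; by exists 1.
by exists i.+1, j.+1.
Qed.

Definition leN (m : nat) (u v : nat -> nat) := forall i, (i < m)%N -> (u i <= v i)%N.

Lemma good_Nm m : good (leN m) (fun _ => True).
Proof.
elim: m => [|m IH]; first by move=> f _; exists 0, 1.
have tr : forall x y z, leN m x y -> leN m y z -> leN m x z.
  by move=> u v w h1 h2 i im; apply: leq_trans (h1 _ im) (h2 _ im).
have gp := good_prod tr IH good_nat.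
apply: (good_code (P := fun u p => p = (u, u m)) _ _ gp).
- by move=> u _; exists (u, u m).
- move=> u _ u' _ _ _ -> -> /= [h1 h2] i; rewrite ltnS leq_eqVlt => /orP[/eqP->//|/h1//].
Qed.

Definition Part (q : nat -> nat) :=
  (forall d, q d.+1 <= q d) /\ exists L, forall d, L <= d -> q d = 0.
Definition leA (q q' : nat -> nat) := forall d, q d <= q' d.

Lemma part_mono q : (forall d, q d.+1 <= q d) -> forall i j, i <= j -> q j <= q i.
Proof.
move=> H i j /subnK <-; elim: (j - i) => [|n IH] //=.
by rewrite addSn; apply: leq_trans (H _) IH.
Qed.

Lemma good_S k C : good leA (fun q => Part q /\ q k < C).
Proof.
pose P (q y : nat -> nat) := (forall i, i < k -> y i = q i) /\
  forall t, t < C -> [/\ k <= y (k+t), q (y (k+t)) <= t &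
                         forall j, k <= j -> q j <= t -> y (k+t) <= j].
apply: (good_code (P := P) _ _ (good_Nm (k + C))).
- move=> q [[mono [L HL]] _].
  have [g Hg] : exists g : nat -> nat, forall t,
      [/\ k <= g t, q (g t) <= t & forall j, k <= j -> q j <= t -> g t <= j].
    apply: (@choiceN nat (fun t v => [/\ k <= v, q v <= t & forall j, k <= j -> q j <= t -> v <= j])) => t.
    have ex : exists i, (k <= i) && (q i <= t).
      by exists (maxn k L); rewrite leq_maxl HL ?leq_maxr.
    case: (ex_minnP ex) => i /andP[ki qi] mi; exists i; split => // j kj qj.
    by apply: mi; rewrite kj qj.
  exists (fun i => if i < k then q i else g (i - k)); split => //.
  split; first by move=> i ik; rewrite ik.
  move=> t _; have -> : (k + t < k) = false by rewrite ltnNge leq_addr.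
  rewrite addKn; exact: Hg.
- move=> q y q' y' [[mono _] qk] [[mono' _] _] [Py1 Py2] [Py1' Py2'] S d.
  case: (ltnP d k) => dk.
    by rewrite -Py1 // -Py1' //; apply: S; apply: leq_trans dk (leq_addr _ _).
  case e: (q d) => [//|s].
  have sC : s < C.
    by have := part_mono mono dk; rewrite e => h; apply: leq_trans h (ltnW qk).
  have [h1 h2 h3] := Py2 s sC.
  have lt1 : d < y (k + s).
    rewrite ltnNge; apply/negP => yd.
    have := part_mono mono yd; rewrite e => /(leq_trans) /(_ h2).
    by rewrite ltnn.
  have lt2 : d < y' (k + s).
    by apply: leq_trans lt1 (S _ _); rewrite ltn_add2l.
  have [h1' h2' h3'] := Py2' s sC.
  rewrite ltnNge; apply/negP => qd.
  by have := h3' d dk qd; rewrite leqNgt lt2.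
Qed.

Lemma good_part : good leA Part.
Proof.
move=> f Pf.
case: (Classical_Prop.classic (exists j, 0 < j /\ leA (f 0) (f j))) => [[j [? ?]]|H].
  by exists 0, j.
have [L HL] := proj2 (Pf 0).
have H2 : forall j, exists d, 0 < j -> d < L /\ f j d < f 0 d.
  move=> j; case: (posnP j) => [->|jp]; first by exists 0.
  apply: Classical_Prop.NNPP => H3; apply: H; exists j; split => // d.
  rewrite leqNgt; apply/negP => lt; apply: H3; exists d => _; split => //.
  rewrite ltnNge; apply/negP => /HL e; move: lt; by rewrite e.
have [c Hc] := choiceN H2.
have [k Hk] := pigeon (c := fun i => c i.+1) (L := L) (fun i => proj1 (Hc i.+1 isT)).
have [g Hg] := inf_sub Hk.
have H4 : forall m, Part (f (g m).+1) /\ f (g m).+1 k < f 0 k.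
  move=> m; split; first exact: Pf.
  case: (Hg m) => e _; rewrite -e; exact: (proj2 (Hc (g m).+1 isT)).
have [a [b [ab r]]] := @good_S k (f 0 k) (fun m => f (g m).+1) H4.
by exists (g a).+1, (g b).+1; split => //; rewrite ltnS; apply: chain_lt ab => m; case: (Hg m).
Qed.

Definition leT n (y y' : nat -> nat -> nat) := forall i, i < n -> leA (y i) (y' i).

Lemma good_PT n : good (leT n) (fun y => forall i, i < n -> Part (y i)).
Proof.
elim: n => [|n IH]; first by move=> f _; exists 0, 1.
have tr : forall x y z, leT n x y -> leT n y z -> leT n x z.
  by move=> u v w h1 h2 i im d; apply: leq_trans (h1 _ im d) (h2 _ im d).
have gp := good_prod tr IH good_part.
apply: (good_code (P := fun u p => p = (u, u n)) _ _ gp).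
- move=> u Hu; exists (u, u n); split => //; split => /= [i ni|]; apply: Hu => //.
  exact: leq_trans ni (leqnSn _).
- move=> u _ u' _ _ _ -> -> /= [h1 h2] i; rewrite ltnS leq_eqVlt => /orP[/eqP->//|/h1//].
Qed.

End WQO.
Import WQO.
Local Open Scope ring_scope.

Section T.
Variable n : nat.
Implicit Types m : dmonom n.

Definition Tn m (i d : nat) : nat :=
  (\sum_(x <- finsupp m) (if (nat_of_ord x.1 == i) && (d <= x.2)%N then m x else 0))%N.

Lemma TnEw m (s : {fset dvar n}) i d : (finsupp m `<=` s)%fset ->
  Tn m i d = (\sum_(x <- s) (if (nat_of_ord x.1 == i) && (d <= x.2)%N then m x else 0))%N.
Proof.
move=> le; rewrite /Tn (big_fset_incl _ le) // => x _.
by rewrite -cmE_neq0 negbK => /eqP ->; case: ifP.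
Qed.

Lemma TnM m1 m2 i d : Tn (mmul m1 m2) i d = (Tn m1 i d + Tn m2 i d)%N.
Proof.
rewrite {1}/Tn mdomD (TnEw _ _ (fsubsetUl _ (finsupp m2))) (TnEw _ _ (fsubsetUr (finsupp m1) _)).
rewrite -big_split /=; apply/eq_bigr=> x _; rewrite cmM; by case: ifP.
Qed.

Lemma TnU (x : dvar n) i d : Tn (ucm x) i d = ((nat_of_ord x.1 == i) && (d <= x.2)%N : nat).
Proof. by rewrite /Tn mdomU big_seq_fset1 cmUU; case: ifP. Qed.

Lemma TnS m (i : 'I_n) d : Tn m i d = (m (i, d) + Tn m i d.+1)%N.
Proof.
have le : (finsupp m `<=` (i, d) |` finsupp m)%fset by apply: fsubsetU1.
rewrite !(TnEw _ _ le).
case: (boolP ((i, d) \in finsupp m)) => hin.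
  have e : ((i, d) |` finsupp m)%fset = finsupp m by apply/fsetP => z; rewrite !inE; case: eqP => // ->.
  rewrite e (big_fsetD1 (i, d)) //= eqxx leqnn /= [in RHS](big_fsetD1 (i, d)) //= ltnn andbF add0n.
  congr (_ + _)%N; apply: eq_big_seq => z; rewrite !inE => /andP[zn _].
  case: z zn => [j e'] /= zn; case: eqP => //= ji; rewrite leq_eqVlt; case: eqP => // ed.
  by case/eqP: zn; congr (_, _) => //; apply/val_inj.
rewrite !big_fsetU1 //= eqxx leqnn ltnn andbF /= add0n.
have -> : m (i, d) = 0%N by apply/eqP; rewrite cmE_eq0.
rewrite add0n; apply: eq_big_seq => z zin; case: z zin => [j e'] zin /=.
case: eqP => //= ji; rewrite leq_eqVlt; case: eqP => // ed.
by case/negP: hin; suff <- : (j, e') = (i, d) by []; congr (_, _) => //; apply/val_inj.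
Qed.

Lemma TnB m i : exists L, forall d, (L <= d)%N -> Tn m i d = 0%N.
Proof.
exists (\max_(x <- finsupp m) x.2.+1)%N => d Ld.
rewrite /Tn big1_seq // => x /andP[_ xin]; case: ifP => // /andP[_ dx].
have := @leq_bigmax_seq _ (enum_fset (finsupp m)) xpredT (fun x : dvar n => x.2.+1) x xin isT.
by move=> h; have := leq_trans (leq_trans h Ld) dx; rewrite ltnn.
Qed.

End T.

Section Alg.
Variables (k : fieldType) (sig : {rmorphism k -> k}) (n : nat).

Lemma mulU (a b : dmonom n) : (<< mmul a b >> : dpoly k n) = << a >> * << b >>.
Proof. by rewrite malgM_def fgmulUU mulr1. Qed.

Lemma shiftU (x : dvar n) : shift_monom (ucm x) = ucm (x.1, x.2.+1).
Proof.
apply/eqP/cmP => z; rewrite /shift_monom cmE fsfun_fun.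
case: (boolP (z \in _)) => [/imfsetP [y] | H].
  rewrite /= mdomU inE => /eqP -> ->; rewrite /= !cmU; case: x => ? ? /=.
  by rewrite !eqxx.
rewrite cmU; case: eqP => // e; case/negP: H; apply/imfsetP; exists x; last by rewrite -e.
by rewrite /= mdomU inE.
Qed.

Lemma sigmaU (m : dmonom n) : sigmaR sig (<< m >> : dpoly k n) = << shift_monom m >>.
Proof.
rewrite /sigmaR mmapE msuppU1 big_seq_fset1 mcoeffUU rmorph1 mpolyC1E mul1r //.
Qed.

Lemma factorU (m : dmonom n) (x : dvar n) : (0 < m x)%N ->
  m = mmul (ucm x) (divcm m (ucm x)).
Proof.
move=> h; apply/eqP/cmP => z; rewrite mulcmE divcmE cmU.
case: (eqVneq x z) => [<-|_] /=; last by rewrite subn0.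
by rewrite subnKC.
Qed.

End Alg.

Section Reach.
Variables (k : fieldType) (sig : {rmorphism k -> k}) (n : nat).
Variable I : dpoly k n -> Prop.
Hypothesis hI : is_well_mixed sig I.

Lemma I_mul (a c : dmonom n) : I << a >> -> I << mmul a c >>.
Proof.
case: hI => [[[_ _ hm] _] _] h; rewrite mulU mulrC; exact: hm.
Qed.

Lemma shift_step (b : dmonom n) (x : dvar n) :
  I << mmul b (ucm x) >> -> I << mmul b (ucm (x.1, x.2.+1)) >>.
Proof.
rewrite (@mulU k n b (ucm x)) (@mulU k n b (ucm (x.1, x.2.+1))) => h.
have := proj2 hI _ _ h.
by rewrite sigmaU shiftU.
Qed.

Lemma shift_many (b : dmonom n) (i : 'I_n) d t :
  I << mmul b (ucm (i, d)) >> -> I << mmul b (ucm (i, d + t)%N) >>.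
Proof.
move=> h; elim: t => [|t IH]; first by rewrite addn0.
have := @shift_step b (i, d + t)%N IH.
by rewrite /= addnS.
Qed.

Lemma Tn_mono (m : dmonom n) (i : 'I_n) d d' : (d <= d')%N -> (Tn m i d' <= Tn m i d)%N.
Proof.
move/subnK <-; elim: (d' - d)%N => [|t IH] //=.
rewrite addSn; apply: leq_trans _ IH; rewrite [X in (_ <= X)%N]TnS; apply: leq_addl.
Qed.

Lemma reach N : forall (m : dmonom n), (mdeg m <= N)%N -> forall m' a,
  (forall (i : 'I_n) d, (Tn m i d <= Tn m' i d)%N) ->
  I << mmul a m >> -> I << mmul a m' >>.
Proof.
elim: N => [|N IH] m dm m' a le.
  have -> : m = mone by apply: mdeg_eq0I; apply/eqP; rewrite -leqn0.
  by rewrite mulm1; apply: I_mul.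
case: (posnP (mdeg m)) => dm0.
  have -> : m = mone by apply: mdeg_eq0I.
  by rewrite mulm1; apply: I_mul.
have [x xin] : exists x, x \in finsupp m.
  apply/fset0Pn; apply: contraTneq dm0 => e.
  by rewrite -leqNgt mdegE e big_seq_fset0.
have mx : (0 < m x)%N by rewrite lt0n cmE_neq0.
have Px : (0 < Tn m x.1 x.2)%N.
  by rewrite TnS -surjective_pairing; apply: leq_trans mx (leq_addr _ _).
move: Px; set i := x.1 => Px.
have [L HL] := TnB m i.
have exd : exists d, (0 < Tn m i d)%N by exists x.2.
have bd : forall d, (0 < Tn m i d)%N -> (d <= L)%N.
  by move=> d; rewrite lt0n; apply: contraR; rewrite -ltnNge => /ltnW /HL ->.
case: (ex_maxnP exd bd) => d Pd maxd.
have Td1 : Tn m i d.+1 = 0%N.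
  by apply/eqP; rewrite -leqn0 leqNgt; apply/negP => /maxd; rewrite ltnn.
have md : (0 < m (i, d))%N by move: Pd; rewrite TnS Td1 addn0.
have Pd' : (0 < Tn m' i d)%N by apply: leq_trans Pd (le _ _).
have [L' HL'] := TnB m' i.
have exe : exists d, (0 < Tn m' i d)%N by exists d.
have bd' : forall d, (0 < Tn m' i d)%N -> (d <= L')%N.
  by move=> d'; rewrite lt0n; apply: contraR; rewrite -ltnNge => /ltnW /HL' ->.
case: (ex_maxnP exe bd') => e Pe maxe.
have Te1 : Tn m' i e.+1 = 0%N.
  by apply/eqP; rewrite -leqn0 leqNgt; apply/negP => /maxe; rewrite ltnn.
have me : (0 < m' (i, e))%N by move: Pe; rewrite TnS Te1 addn0.
have de : (d <= e)%N by apply: maxe.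
set m0 := divcm m (ucm (i, d)).
set m0' := divcm m' (ucm (i, e)).
have Em := factorU md; have Em' := factorU me.
have dm0' : (mdeg m0 <= N)%N.
  by move: dm; rewrite Em mdegM mdegU add1n ltnS.
have le0 : forall (j : 'I_n) t, (Tn m0 j t <= Tn m0' j t)%N.
  move=> j t; have := le j t; rewrite {1}Em {1}Em' !TnM !TnU /=.
  case: (eqVneq (nat_of_ord i) j) => [ij|nij] /=; last by rewrite !add0n.
  case: (leqP t d) => td.
    by rewrite (leq_trans td de) !add1n ltnS.
  have : Tn m j t = 0%N.
    by apply/eqP; rewrite -leqn0 -Td1 -ij; apply: Tn_mono.
  move=> h0 _; have : (Tn m0 j t <= Tn m j t)%N.
    by have := TnM (ucm (i, d)) m0 j t; rewrite -Em => ->; apply: leq_addl.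
  by rewrite h0 leqn0 => /eqP ->.
rewrite Em mulmA => /(IH _ dm0' m0' _ le0).
rewrite -mulmA [mmul _ m0']mulmC mulmA => /(@shift_many _ i d (e - d)).
rewrite (subnKC de) => h.
have E : mmul (mmul a m0') (ucm (i, e)) = mmul a m'.
  apply/eqP/cmP => z; rewrite !mulcmE /m0' divcmE cmU -addnA; congr (_ + _)%N.
  case: (eqVneq (i, e) z) => [<-|_] /=; last by rewrite subn0 addn0.
  by rewrite addn1 subn1 prednK.
rewrite -E; exact: h.
Qed.

End Reach.

Theorem corollary4p11 (k : fieldType) (sig : {rmorphism k -> k}) (n : nat)
  (hchar : [pchar k] =i pred0)
  (I : nat -> dpoly k n -> Prop)
  (hwm : forall j, is_well_mixed sig (I j))
  (hgen : forall j, exists F : dpoly k n -> Prop,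
            (forall f, F f -> is_monomial f) /\
            (forall a, I j a <-> wm_closure sig F a)) :
  ~ (forall j, (forall a, I j a -> I j.+1 a) /\ ~ (forall a, I j.+1 a -> I j a)).
Proof.
move=> chain.
have mono : forall i j, (i <= j)%N -> forall a, I i a -> I j a.
  move=> i j /subnK <-; elim: (j - i)%N => [|t IH] a h //=.
  by rewrite addSn; apply: (proj1 (chain _)); apply: IH.
have exm : forall j, exists mm : dmonom n, I j.+1 << mm >> /\ ~ I j << mm >>.
  move=> j; case: (chain j) => sub nsub; have [F [Fm HF]] := hgen j.+1.
  apply: Classical_Prop.NNPP => H; apply: nsub => a /HF Ha; apply: Ha; first exact: hwm.
  move=> f Ff; apply: Classical_Prop.NNPP => nf; apply: H.
  case: (Fm f Ff) => mm e; exists mm; rewrite -e; split => //.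
  by apply/HF => J _ hJ; apply: hJ.
have [mm Hmm] := choiceN exm.
have := @good_PT n (fun j => fun i d => Tn (mm j) i d).
case.
  move=> j i ni; split.
    move=> d; have -> : i = nat_of_ord (Ordinal ni) by [].
    by rewrite [X in (_ <= X)%N]TnS leq_addl.
  exact: TnB.
move=> a [b [ab le]].
have le' : forall (i : 'I_n) d, (Tn (mm a) i d <= Tn (mm b) i d)%N.
  by move=> i d; apply: le.
have h1 : I a.+1 << mmul mone (mm a) >> by rewrite mul1m; case: (Hmm a).
have := reach (hwm a.+1) (leqnn _) le' h1.
rewrite mul1m => /(mono _ _ ab); by case: (Hmm b).
Qed.
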